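(* Let $T\in(0,\infty)$, $c\in[2,\infty)$ and $f\in C(\mathbb{R},\mathbb{R})$. For every $d\in\mathbb{N}$ let $\beta^d\in C(\mathbb{R}^d,\mathbb{R}^d)$, $\sigma^d\in C(\mathbb{R}^d,\mathbb{R}^{d\times d})$, $\gamma^d\in C(\mathbb{R}^{2d},\mathbb{R}^d)$, $g^d\in C(\mathbb{R}^d,\mathbb{R})$, and let $\nu^d$ be a Lévy measure on $\mathcal{B}(\mathbb{R}^d\setminus\{0\})$. Assume: (A1) for every $d$ there is $C_d\in(0,\infty)$ with $\|\gamma^d(x,z)\|^2\le C_d(1\wedge\|z\|^2)$ and $\|\gamma^d(x,z)-\gamma^d(y,z)\|^2\le C_d\|x-y\|^2(1\wedge\|z\|^2)$ for all $x,y,z\in\mathbb{R}^d$; (A2) for all $d$, $x,z$ the Jacobian $(D_x\gamma^d)(x,z)$ exists and there is $\lambda_d\in(0,\infty)$ with $\lambda_d\le|\det(I_d+\delta(D_x\gamma^d)(x,z))|$ for all $x,z\in\mathbb{R}^d$, $\delta\in[0,1]$; (A3) for all $d\in\mathbb{N}$, $x,y\in\mathbb{R}^d$, $w_1,w_2\in\mathbb{R}$: $\|\beta^d(x)-\beta^d(y)\|^2+\|\sigma^d(x)-\sigma^d(y)\|_F^2+\int_{\mathbb{R}^d\setminus\{0\}}\|\gamma^d(x,z)-\gamma^d(y,z)\|^2\nu^d(dz)\le c\|x-y\|^2$, $|f(w_1)-f(w_2)|^2\le c|w_1-w_2|^2$, $|g^d(x)-g^d(y)|^2\le cd^cT^{-1}\|x-y\|^2$,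 and $\|\beta^d(0)\|^2+\|\sigma^d(0)\|_F^2+\int_{\mathbb{R}^d\setminus\{0\}}\|\gamma^d(0,z)\|^2\nu^d(dz)+T^3(|f(0)|+1)^2+T|g^d(0)|^2\le cd^c$. Let $b=64\big(1+|c^{1/2}(4c^{1/2}+2c^{1/2}T^{-3/2})|^{1/2}\big)$. Then there exist, for every $\varepsilon\in(0,1)$, $f_\varepsilon\in C(\mathbb{R},\mathbb{R})$ and $\Phi_{f_\varepsilon}\in\mathbf{N}$ such that for all $d\in\mathbb{N}$, $\varepsilon\in(0,1)$, $w_1,w_2\in\mathbb{R}$: $\mathcal{R}(\Phi_{f_\varepsilon})=f_\varepsilon$, $\dim(\mathcal{D}(\Phi_{f_\varepsilon}))=3\le\frac{bd^c\varepsilon^{-c}}{4}$, $|||\mathcal{D}(\Phi_{f_\varepsilon})|||\le\frac{b\varepsilon^{-2}}{4}$, $|f_\varepsilon(w_1)-f_\varepsilon(w_2)|^2\le c|w_1-w_2|^2$, $|f(w_1)-f_\varepsilon(w_1)|^2\le\varepsilon(1+|w_1|^4)$, and $T^3|f_\varepsilon(0)|\le cd^c$.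
   Context: $\|\cdot\|$ Euclidean norm, $\|\cdot\|_F$ Frobenius norm; for $x=(x_1,\dots,x_k)$, $|||x|||=\max_i|x_i|$ and $\dim(x)=k$. Deep neural networks: $\mathbf{A}_k\colon\mathbb{R}^k\to\mathbb{R}^k$ is the componentwise ReLU; $\mathbf{N}=\bigcup_{H\in\mathbb{N}}\bigcup_{(k_0,\dots,k_{H+1})\in\mathbb{N}^{H+2}}\prod_{n=1}^{H+1}(\mathbb{R}^{k_n\times k_{n-1}}\times\mathbb{R}^{k_n})$. For $\Phi=((W_1,B_1),\dots,(W_{H+1},B_{H+1}))$ with $W_n\in\mathbb{R}^{k_n\times k_{n-1}}$, $B_n\in\mathbb{R}^{k_n}$: $\mathcal{D}(\Phi)=(k_0,\dots,k_{H+1})$ and $\mathcal{R}(\Phi)\in C(\mathbb{R}^{k_0},\mathbb{R}^{k_{H+1}})$, $(\mathcal{R}(\Phi))(x_0)=W_{H+1}x_H+B_{H+1}$ with $x_n=\mathbf{A}_{k_n}(W_nx_{n-1}+B_n)$, $n=1,\dots,H$. *)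

(* Defs.v *)
From HB Require Import structures.
From mathcomp Require Import all_boot all_order all_algebra.
From mathcomp Require Import all_classical all_reals all_analysis.
Set Implicit Arguments. Unset Strict Implicit. Unset Printing Implicit Defensive.
Import Order.TTheory GRing.Theory Num.Theory.
Import numFieldNormedType.Exports.
Local Open Scope classical_set_scope.
Local Open Scope ring_scope.

Definition sqnorm (R : realType) (d : nat) (x : 'rV[R]_d) : R :=
  \sum_(i < d) (x 0 i) ^+ 2.

Definition sqfrob (R : realType) (m n : nat) (A : 'M[R]_(m, n)) : R :=
  \sum_(i < m) \sum_(j < n) (A i j) ^+ 2.

Definition RdB (R : realType) (d : nat) :=
  g_sigma_algebraType (@open 'rV[R]_d).

(* A Levy measure on B(R^d \ {0}), represented (equivalently) as a measure
   on B(R^d) giving no mass to {0}, with  int (1 /\ ||z||^2) nu(dz) < oo. *)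
Definition levy_measure (R : realType) (d : nat)
  (nu : {measure set (RdB R d) -> \bar R}) : Prop :=
  nu [set (0%R : 'rV[R]_d)] = 0%E /\
  (\int[nu]_(z in ~` [set (0%R : 'rV[R]_d)]) (Num.min 1 (sqnorm (z : 'rV[R]_d)))%:E
     < +oo)%E.

Definition partials_exist (R : realType) (d : nat) (f : 'rV[R]_d -> 'rV[R]_d)
  (x : 'rV[R]_d) : Prop :=
  forall j : 'I_d, derivable f x (delta_mx 0 j).

Definition jac (R : realType) (d : nat) (f : 'rV[R]_d -> 'rV[R]_d)
  (x : 'rV[R]_d) : 'M[R]_d :=
  \matrix_(i < d, j < d) ('D_(delta_mx 0 j) f x) 0 i.

Definition relu (R : realType) (r : R) : R := Num.max r 0.

Inductive DNN (R : realType) : nat -> nat -> Type :=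
| DNNout (k0 k1 : nat) (W : 'M[R]_(k1, k0)) (B : 'cV[R]_k1) : DNN R k0 k1
| DNNlayer (k0 k1 k2 : nat) (W : 'M[R]_(k1, k0)) (B : 'cV[R]_k1)
    (rest : DNN R k1 k2) : DNN R k0 k2.

Fixpoint dims (R : realType) (k0 k2 : nat) (Phi : DNN R k0 k2) : seq nat :=
  match Phi with
  | DNNout k0 k1 _ _ => [:: k0; k1]
  | DNNlayer k0 _ _ _ _ rest => k0 :: dims rest
  end.

Definition is_DNN (R : realType) (k0 k2 : nat) (Phi : DNN R k0 k2) : bool :=
  all (fun k => 0 < k)%N (dims Phi).

Fixpoint realize (R : realType) (k0 k2 : nat) (Phi : DNN R k0 k2)
  : 'cV[R]_k0 -> 'cV[R]_k2 :=
  match Phi in DNN _ a b return 'cV[R]_a -> 'cV[R]_b with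
  | DNNout _ _ W B => fun x => W *m x + B
  | DNNlayer _ _ _ W B rest => fun x => realize rest (map_mx (@relu R) (W *m x + B))
  end.

Definition maxdim (R : realType) (k0 k2 : nat) (Phi : DNN R k0 k2) : nat :=
  foldr maxn 0%N (dims Phi).

(* Main.v *)
Require Import Defs.
From HB Require Import structures.
From mathcomp Require Import all_boot all_order all_algebra.
From mathcomp Require Import all_classical all_reals all_analysis.
From mathcomp Require Import ring lra zify.
Import Order.TTheory GRing.Theory Num.Theory.
Import numFieldNormedType.Exports.
Local Open Scope classical_set_scope.
Local Open Scope ring_scope.
Set Implicit Arguments. Unset Strict Implicit.

Section S1.
Variable R : realType.

Lemma lip_cont (f : R -> R) (L : R) : 0 <= L ->
  (forall x y, `|f x - f y| <= L * `|x - y|) -> continuous f.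
Proof.
move=> L0 H x; apply/(@cvgrPdist_lt _ _ _ (nbhs x)) => e e0.
have L1 : 0 < L + 1 by lra.
near=> z; apply: (le_lt_trans (H x z)).
apply: (@le_lt_trans _ _ ((L+1) * `|x - z|)); first by rewrite ler_wpM2r //; lra.
rewrite -ltr_pdivlMl //.
near: z; apply: cvgr_dist_lt => //.
by rewrite mulr_gt0 // invr_gt0.
Unshelve. all: by end_near. Qed.
End S1.

Section S.
Variable R : realType.

Lemma relu_cases (u : R) : (0 <= u /\ relu u = u) \/ (u < 0 /\ relu u = 0).
Proof.
rewrite /relu; case: (lerP 0 u) => h.
- by left; split => //; rewrite max_l.
- by right; split => //; rewrite max_r // ltW.
Qed.

Lemma relu_mono (u v : R) : u <= v -> relu u <= relu v.
Proof.
move=> uv; case: (relu_cases u) => [[h1 ->]|[h1 ->]];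
  case: (relu_cases v) => [[h2 ->]|[h2 ->]]; lra.
Qed.

Lemma reluN (u : R) : relu u - relu (- u) = u.
Proof.
case: (relu_cases u) => [[h1 ->]|[h1 ->]];
  case: (relu_cases (-u)) => [[h2 ->]|[h2 ->]]; lra.
Qed.

Definition Dj (p : nat -> R) j x := relu (x - p j) - relu (x - p j.+1).
Definition sl (h : R -> R) (p : nat -> R) j := (h (p j.+1) - h (p j)) / (p j.+1 - p j).
Definition Pn h p n x := \sum_(0 <= j < n) sl h p j * Dj p j x.

Lemma Dj_lo p j x : x <= p j -> p j <= p j.+1 -> Dj p j x = 0.
Proof.
move=> h1 h2; rewrite /Dj.
case: (relu_cases (x - p j)) => [[a ->]|[a ->]];
  case: (relu_cases (x - p j.+1)) => [[b ->]|[b ->]]; lra.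
Qed.

Lemma Dj_hi p j x : p j.+1 <= x -> p j <= p j.+1 -> Dj p j x = p j.+1 - p j.
Proof.
move=> h1 h2; rewrite /Dj.
case: (relu_cases (x - p j)) => [[a ->]|[a ->]];
  case: (relu_cases (x - p j.+1)) => [[b ->]|[b ->]]; lra.
Qed.

Lemma Dj_mid p j x : p j <= x <= p j.+1 -> Dj p j x = x - p j.
Proof.
move=> /andP[h1 h2]; rewrite /Dj.
case: (relu_cases (x - p j)) => [[a ->]|[a ->]];
  case: (relu_cases (x - p j.+1)) => [[b ->]|[b ->]]; lra.
Qed.

Lemma Dj_mono p j x y : x <= y -> p j <= p j.+1 -> Dj p j x <= Dj p j y.
Proof.
move=> h1 h2; rewrite /Dj.
case: (relu_cases (x - p j)) => [[a ->]|[a ->]];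
  case: (relu_cases (x - p j.+1)) => [[b ->]|[b ->]];
case: (relu_cases (y - p j)) => [[c ->]|[c ->]];
  case: (relu_cases (y - p j.+1)) => [[d ->]|[d ->]]; lra.
Qed.

Variables (h : R -> R) (L : R).
Hypothesis hL : forall a b, `|h a - h b| <= L * `|a - b|.

Lemma L_ge0 : 0 <= L.
Proof. have := hL 1 0; rewrite subr0 normr1 mulr1; apply: le_trans; exact: normr_ge0. Qed.

Lemma sl_le p j : p j < p j.+1 -> `|sl h p j| <= L.
Proof.
move=> hj; rewrite /sl normrM normfV.
have pos : 0 < `|p j.+1 - p j| by rewrite normr_gt0 subr_eq0 gt_eqF.
rewrite ler_pdivrMr //; exact: hL.
Qed.

Lemma Pn0 p x : Pn h p 0 x = 0.
Proof. by rewrite /Pn big_geq. Qed.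

Lemma PnS p n x : Pn h p n.+1 x = Pn h p n x + sl h p n * Dj p n x.
Proof. by rewrite /Pn big_nat_recr. Qed.

Lemma Pn_hi p n : (forall j, (j < n)%N -> p j < p j.+1) ->
  forall x, p n <= x -> Pn h p n x = h (p n) - h (p 0).
Proof.
elim: n => [|n IH] hp x hx; first by rewrite Pn0 subrr.
have hn : p n < p n.+1 by apply: hp.
rewrite PnS IH; last 2 first.
- by move=> j jn; apply: hp; apply: ltnW.
- by apply: le_trans hx; apply: ltW.
rewrite Dj_hi //; last by apply: ltW.
rewrite /sl divfK; first by ring.
by rewrite subr_eq0 gt_eqF.
Qed.

Lemma Pn_lo p n : (forall j, (j < n)%N -> p 0 <= p j /\ p j <= p j.+1) ->
  forall x, x <= p 0 -> Pn h p n x = 0.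
Proof.
move=> hp x hx; rewrite /Pn big1_seq // => j; rewrite mem_index_iota => /andP[_ jn].
have [h1 h2] := hp j jn.
by rewrite Dj_lo ?mulr0 //; apply: le_trans h1.
Qed.

Lemma cell_err p j x : p j < p j.+1 -> p j <= x <= p j.+1 ->
  `|h x - h (p j) - sl h p j * (x - p j)| <= L * (p j.+1 - p j).
Proof.
move=> hj /andP[h1 h2].
have hs := sl_le hj.
set s := sl h p j.
have e2 : h x - h (p j) - s * (x - p j) = h x - h (p j.+1) - s * (x - p j.+1).
  rewrite /s /sl. field. by rewrite subr_eq0 gt_eqF.
have b1 : `|h x - h (p j) - s * (x - p j)| <= 2 * L * (x - p j).
  apply: (le_trans (ler_normB _ _)).
  have e1 : `|x - p j| = x - p j by rewrite ger0_norm // subr_ge0.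
  have := hL x (p j); rewrite e1 => a.
  rewrite normrM e1.
  have : `|s| * (x - p j) <= L * (x - p j) by rewrite ler_wpM2r // subr_ge0.
  lra.
have b2 : `|h x - h (p j) - s * (x - p j)| <= 2 * L * (p j.+1 - x).
  rewrite e2; apply: (le_trans (ler_normB _ _)).
  have e1 : `|x - p j.+1| = - (x - p j.+1) by rewrite ler0_norm // subr_le0.
  have := hL x (p j.+1); rewrite e1 => a.
  rewrite normrM e1.
  have : `|s| * (p j.+1 - x) <= L * (p j.+1 - x) by rewrite ler_wpM2r // subr_ge0.
  lra.
have L0 := L_ge0.
case: (lerP (x - p j) (p j.+1 - x)) => c.
- apply: (le_trans b1).
  have : L * (x - p j) <= L * (p j.+1 - x) by rewrite ler_wpM2l.
  lra.
- apply: (le_trans b2).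
  have : L * (p j.+1 - x) <= L * (x - p j) by rewrite ler_wpM2l // ltW.
  lra.
Qed.

Lemma Pn_err p n (tol : R -> R) : (forall x, 0 <= tol x) ->
  (forall j, (j < n)%N -> p j < p j.+1) ->
  (forall j x, (j < n)%N -> p j <= x <= p j.+1 -> L * (p j.+1 - p j) <= tol x) ->
  forall x, p 0 <= x <= p n -> `|h x - h (p 0) - Pn h p n x| <= tol x.
Proof.
move=> t0; elim: n => [|n IH] hp ht x /andP[hx1 hx2].
  have -> : x = p 0 by apply/eqP; rewrite eq_le hx1 hx2.
  by rewrite Pn0 !subrr normr0.
have hn : p n < p n.+1 by apply: hp.
have hp' : forall j, (j < n)%N -> p j < p j.+1 by move=> j jn; apply: hp; apply: ltnW.
have ht' : forall j x, (j < n)%N -> p j <= x <= p j.+1 -> L * (p j.+1 - p j) <= tol x.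
  by move=> j y jn; apply: ht; apply: ltnW.
rewrite PnS; case: (lerP x (p n)) => c.
- rewrite Dj_lo // ?mulr0 ?addr0; last by apply: ltW.
  by apply: IH => //; rewrite hx1 c.
- rewrite Pn_hi //; last by apply: ltW.
  have m : p n <= x <= p n.+1 by rewrite (ltW c) hx2.
  rewrite Dj_mid //.
  have -> : h x - h (p 0) - (h (p n) - h (p 0) + sl h p n * (x - p n))
     = h x - h (p n) - sl h p n * (x - p n) by ring.
  apply: le_trans (cell_err hn m) _.
  by apply: ht.
Qed.

Lemma Pn_lip p n : (forall j, (j < n)%N -> p j < p j.+1) ->
  forall x y, x <= y -> `|Pn h p n x - Pn h p n y|
     <= L * ((relu (y - p 0) - relu (y - p n)) - (relu (x - p 0) - relu (x - p n))).
Proof.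
elim: n => [|n IH] hp x y xy.
  by rewrite !Pn0 subrr normr0 !subrr mulr0.
have hn : p n < p n.+1 by apply: hp.
have hp' : forall j, (j < n)%N -> p j < p j.+1 by move=> j jn; apply: hp; apply: ltnW.
rewrite !PnS.
have e : Pn h p n x + sl h p n * Dj p n x - (Pn h p n y + sl h p n * Dj p n y)
  = (Pn h p n x - Pn h p n y) + sl h p n * (Dj p n x - Dj p n y) by ring.
rewrite e; apply: (le_trans (ler_normD _ _)).
have i1 := IH hp' x y xy.
have dm := Dj_mono xy (ltW hn).
have i2 : `|sl h p n * (Dj p n x - Dj p n y)| <= L * (Dj p n y - Dj p n x).
  have e3 : `|Dj p n x - Dj p n y| = Dj p n y - Dj p n x.
    by rewrite distrC ger0_norm // subr_ge0.
  rewrite normrM e3.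
  by rewrite ler_wpM2r ?subr_ge0 // sl_le.
have : L * (relu (y - p 0) - relu (y - p n) - (relu (x - p 0) - relu (x - p n)))
   + L * (Dj p n y - Dj p n x) =
   L * (relu (y - p 0) - relu (y - p n.+1) - (relu (x - p 0) - relu (x - p n.+1))).
  rewrite /Dj; ring.
lra.
Qed.
End S.

Section G.
Variable R : realType.
Definition gridR (m : R) (j : nat) : R := m / (m - j%:R) - 1.

Variable N : nat.
Let m : R := N.+1%:R.

Lemma grid0 : gridR m 0 = 0.
Proof. rewrite /gridR subr0 divff ?subrr //; by rewrite /m pnatr_eq0. Qed.

Lemma gridN : gridR m N = N%:R.
Proof.
rewrite /gridR /m -addn1 natrD addrAC subrr add0r divr1; lra.
Qed.

Lemma natS (j : nat) : j.+1%:R = j%:R + 1 :> R.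
Proof. by rewrite -addn1 natrD. Qed.

Lemma a_ge (j : nat) : (j < N)%N -> 2 <= m - j%:R.
Proof.
move=> jN; rewrite /m.
have : (j.+1 <= N)%N by [].
rewrite -(ler_nat R) natS => h.
rewrite natS; lra.
Qed.


Lemma m_gt0 : 0 < m. Proof. by rewrite /m ltr0n. Qed.

Lemma grid_lt (j : nat) : (j < N)%N -> gridR m j < gridR m j.+1.
Proof.
move=> jN; have ha := a_ge jN; have hm := m_gt0.
rewrite /gridR natS; set a := m - j%:R.
have ha2 : 2 <= a by [].
have -> : m - (j%:R + 1) = a - 1 by rewrite /a; ring.
rewrite ltrD2r ltr_pdivrMr; last lra.
rewrite mulrAC ltr_pdivlMr; last lra.
nra.
Qed.

Lemma grid_ge0 (j : nat) : (j <= N)%N -> 0 <= gridR m j.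
Proof.
move=> jN; have hm := m_gt0.
have ha : 1 <= m - j%:R.
  have : j%:R <= N%:R :> R by rewrite ler_nat.
  rewrite /m natS; lra.
rewrite /gridR subr_ge0 ler_pdivlMr; last lra.
have := ler0n R j; lra.
Qed.

Lemma grid_cell (L x : R) (j : nat) : 0 <= L -> (j < N)%N -> gridR m j <= x ->
  L * (gridR m j.+1 - gridR m j) <= 2 * L * (1 + x) ^+ 2 / m.
Proof.
move=> L0 jN hx; have ha := a_ge jN; have hm := m_gt0.
have g0 := grid_ge0 (ltnW jN).
have e1 : 1 + gridR m j = m / (m - j%:R) by rewrite /gridR; ring.
have h1 : (1 + gridR m j) ^+ 2 <= (1 + x) ^+ 2.
  have : 0 <= 1 + gridR m j by lra.
  nra.
apply: (@le_trans _ _ (2 * L * (1 + gridR m j) ^+ 2 / m)); last first.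
  rewrite ler_pM2r ?invr_gt0 //. apply: ler_wpM2l => //. lra.
rewrite e1 /gridR (natS j); set a := m - j%:R.
have ha2 : 2 <= a by [].
have -> : m - (j%:R + 1) = a - 1 by rewrite /a; ring.
have -> : m / (a - 1) - 1 - (m / a - 1) = m / (a * (a - 1)).
  field. apply/andP; split; apply/eqP; lra.
have -> : 2 * L * (m / a) ^+ 2 / m = L * (2 * m / (a * a)).
  field. apply/andP; split; apply/eqP; lra.
apply: ler_wpM2l => //.
rewrite ler_pdivrMr; last nra.
rewrite mulrAC ler_pdivlMr; last nra.
have : 0 <= m * a * (a - 2) by rewrite !mulr_ge0 //; lra.
nra.
Qed.
End G.

Section Net.
Variable R : realType.
Definition nv (e : R * R * R) (x : R) : R := e.2 * relu (e.1.1 * x + e.1.2).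
Definition e0 : R * R * R := (0, 0, 0).
Definition net (a0 : R) (s : seq (R * R * R)) : DNN R 1 1 :=
  @DNNlayer R 1 (size s) 1 (\matrix_(i < size s, j < 1) (nth e0 s i).1.1)
    (\col_(i < size s) (nth e0 s i).1.2)
    (@DNNout R (size s) 1 (\row_(i < size s) (nth e0 s i).2) (const_mx a0)).

Lemma net_real a0 s x :
  realize (net a0 s) (const_mx x) = const_mx (a0 + \sum_(e <- s) nv e x).
Proof.
apply/matrixP => i j; rewrite /= !mxE.
rewrite (big_nth e0) big_mkord addrC; congr (_ + _).
apply: eq_bigr => k _; rewrite !mxE big_ord1 !mxE /nv.
by [].
Qed.

Lemma net_dims a0 s : dims (net a0 s) = [:: 1%N; size s; 1%N].
Proof. by []. Qed.

Lemma net_maxdim a0 s : (0 < size s)%N -> maxdim (net a0 s) = size s.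
Proof. move=> h; rewrite /maxdim /= maxn0 (maxn_idPl h) (maxn_idPr h) //. Qed.

Lemma net_is a0 s : (0 < size s)%N -> is_DNN (net a0 s).
Proof. by move=> h; rewrite /is_DNN /= h. Qed.
End Net.

Lemma grid_props (R : realType) (N : nat) : forall j, (j < N)%N ->
  gridR (N.+1%:R : R) 0 <= gridR N.+1%:R j /\ gridR (N.+1%:R : R) j <= gridR N.+1%:R j.+1.
Proof.
move=> j jN; rewrite grid0; split; first by apply: grid_ge0; apply: ltnW.
by apply: ltW; apply: grid_lt.
Qed.

Lemma onesided (R : realType) (c eps : R) (N : nat) (hc : 2 <= c) (he0 : 0 < eps)
  (he1 : eps < 1) (hN : (0 < N)%N) (hm : 36 * c <= eps * (N.+1%:R) ^+ 2)
  (h : R -> R) : (forall a b, `|h a - h b| <= Num.sqrt c * `|a - b|) ->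
  forall x, 0 <= x -> `|h x - h 0 - Pn h (gridR N.+1%:R) N x| ^+ 2 <= eps * (1 + x ^+ 4).
Proof.
set L := Num.sqrt c; set m : R := N.+1%:R.
move=> hL x x0.
have Lsq : L ^+ 2 = c by rewrite /L sqr_sqrtr //; lra.
have L0 : 0 <= L by apply: sqrtr_ge0.
have hmp : 0 < m by rewrite /m ltr0n.
have hN1 : 1 <= N%:R :> R by rewrite ler1n.
have em : m = N%:R + 1 by rewrite /m -addn1 natrD.
case: (lerP x N%:R) => cx.
- have := @Pn_err R h L hL (gridR m) N (fun y => 2 * L * (1 + y) ^+ 2 / m).
  rewrite grid0 => H.
  have E : `|h x - h 0 - Pn h (gridR m) N x| <= 2 * L * (1 + x) ^+ 2 / m.
    apply: H.
    - move=> y; apply: mulr_ge0; last by rewrite invr_ge0 ltW.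
      apply: mulr_ge0; [lra | exact: sqr_ge0].
    - by move=> j jN; apply: grid_lt.
    - move=> j y jN /andP[a b]; exact: grid_cell.
    - by rewrite /m gridN x0 cx.
  move: E; rewrite ler_pdivlMr // => E.
  set e := `|_| in E *.
  have e0 : 0 <= e by apply: normr_ge0.
  have E2 : (e * m) ^+ 2 <= 4 * c * (1 + x) ^+ 4.
    have : 0 <= e * m by rewrite mulr_ge0 // ltW.
    move=> h0.
    have -> : 4 * c * (1 + x) ^+ 4 = (2 * L * (1 + x) ^+ 2) ^+ 2 by rewrite -Lsq; ring.
    nra.
  have P : (1 + x) ^+ 4 <= 8 * (1 + x ^+ 4).
    have : 0 <= (x - 1) ^+ 2 * (7 * x ^+ 2 + 10 * x + 7).
      apply: mulr_ge0; first exact: sqr_ge0.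
      have : 0 <= x ^+ 2 by exact: sqr_ge0.
      lra.
    nra.
  have : e ^+ 2 * m ^+ 2 <= eps * (1 + x ^+ 4) * m ^+ 2.
    have : 0 <= c * (1 + x ^+ 4) by apply: mulr_ge0; nra.
    rewrite -exprMn; nra.
  move=> F. have m2 : 0 < m ^+ 2 by apply: exprn_gt0.
  by rewrite -(ler_pM2r m2).
- have := @Pn_hi R h (gridR m) N (fun j jN => grid_lt R jN) x.
  rewrite (gridN R N) grid0 => ->; last by apply: ltW.
  have -> : h x - h 0 - (h N%:R - h 0) = h x - h N%:R by ring.
  have ex : `|x - N%:R| = x - N%:R by rewrite ger0_norm // subr_ge0 ltW.
  have := hL x N%:R; rewrite ex.
  set e := `|_| => E.
  have e0 : 0 <= e by apply: normr_ge0.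
  have E1 : e <= L * x.
    apply: le_trans E _; apply: ler_wpM2l => //; have := ler0n R N; lra.
  have E2 : e ^+ 2 <= c * x ^+ 2.
    rewrite -Lsq; have : 0 <= L * x by apply: mulr_ge0.
    move=> ?; rewrite -exprMn; nra.
  have hN2 : c <= eps * N%:R ^+ 2.
    have : m <= 2 * N%:R by lra.
    move=> h2. have : m ^+ 2 <= 4 * N%:R ^+ 2 by nra.
    nra.
  have : c * x ^+ 2 <= eps * x ^+ 4.
    have : N%:R ^+ 2 <= x ^+ 2 by nra.
    move=> h3. have x2 : 0 <= x ^+ 2 by exact: sqr_ge0.
    have a1 : c * x ^+ 2 <= eps * N%:R ^+ 2 * x ^+ 2 by rewrite ler_wpM2r.
    have a2 : eps * N%:R ^+ 2 * x ^+ 2 <= eps * x ^+ 2 * x ^+ 2.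
      by rewrite ler_wpM2r // ler_wpM2l // ltW.
    have -> : eps * x ^+ 4 = eps * x ^+ 2 * x ^+ 2 by ring.
    exact: le_trans a1 a2.
  have : 0 <= eps by lra.
  nra.
Qed.

Definition negf (R : realType) (f : R -> R) := fun y => f (- y).
Definition fe (R : realType) (f : R -> R) (N : nat) (x : R) :=
  f 0 + Pn f (gridR N.+1%:R) N x + Pn (negf f) (gridR N.+1%:R) N (- x).

Lemma negf_lip (R : realType) (f : R -> R) L : (forall a b, `|f a - f b| <= L * `|a - b|) ->
  forall a b, `|negf f a - negf f b| <= L * `|a - b|.
Proof. by move=> hL a b; rewrite /negf; apply: le_trans (hL _ _) _; rewrite -opprD normrN. Qed.

Lemma fe0 (R : realType) (f : R -> R) N : fe f N 0 = f 0.
Proof.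
rewrite /fe oppr0 (@Pn_lo R f (gridR N.+1%:R) N) ?(@Pn_lo R (negf f) (gridR N.+1%:R) N)
  ?grid0 ?addr0 //; move=> j jN; rewrite -(grid0 R N); exact: grid_props.
Qed.

Lemma fe_err (R : realType) (c eps : R) (N : nat) (hc : 2 <= c) (he0 : 0 < eps)
  (he1 : eps < 1) (hN : (0 < N)%N) (hm : 36 * c <= eps * (N.+1%:R) ^+ 2)
  (f : R -> R) : (forall a b, `|f a - f b| <= Num.sqrt c * `|a - b|) ->
  forall w, `|f w - fe f N w| ^+ 2 <= eps * (1 + `|w| ^+ 4).
Proof.
move=> hL w; case: (lerP 0 w) => w0.
- rewrite (ger0_norm w0) /fe (@Pn_lo R (negf f) (gridR N.+1%:R) N); last 2 first.
  + exact: grid_props.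
  + by rewrite grid0 oppr_le0.
  rewrite addr0 opprD addrA.
  exact: (onesided hc he0 he1 hN hm hL w0).
- rewrite (ltr0_norm w0) /fe (@Pn_lo R f (gridR N.+1%:R) N); last 2 first.
  + exact: grid_props.
  + by rewrite grid0 ltW.
  rewrite addr0.
  have -> : f w = negf f (- w) by rewrite /negf opprK.
  have -> : f 0 = negf f 0 by rewrite /negf oppr0.
  rewrite opprD addrA.
  have w1 : 0 <= - w by rewrite oppr_ge0 ltW.
  exact: (onesided hc he0 he1 hN hm (negf_lip hL) w1).
Qed.

Lemma fe_lip (R : realType) (L : R) (N : nat) (f : R -> R) :
  (forall a b, `|f a - f b| <= L * `|a - b|) ->
  forall x y, `|fe f N x - fe f N y| <= L * `|x - y|.
Proof.
move=> hL.
have hp : forall j, (j < N)%N -> gridR (N.+1%:R : R) j < gridR N.+1%:R j.+1.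
  by move=> j jN; apply: grid_lt.
have K0 : 0 <= gridR (N.+1%:R : R) N by apply: grid_ge0.
have L0 : 0 <= L by apply: (L_ge0 hL).
have H : forall x y, x <= y -> `|fe f N x - fe f N y| <= L * (y - x).
  move=> x y xy.
  have e : fe f N x - fe f N y = (Pn f (gridR N.+1%:R) N x - Pn f (gridR N.+1%:R) N y)
     - (Pn (negf f) (gridR N.+1%:R) N (- y) - Pn (negf f) (gridR N.+1%:R) N (- x)).
    rewrite /fe; ring.
  rewrite e; apply: (le_trans (ler_normB _ _)).
  have i1 := Pn_lip hL hp xy.
  have nxy : - y <= - x by rewrite lerN2.
  have i2 := Pn_lip (negf_lip hL) hp nxy.
  rewrite !grid0 !subr0 in i1 i2.
  set K := gridR (N.+1%:R : R) N in i1 i2 K0.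
  have r1 := reluN x; have r2 := reluN y.
  have m1 : relu (x - K) <= relu (y - K) by apply: relu_mono; lra.
  have m2 : relu (- y - K) <= relu (- x - K) by apply: relu_mono; lra.
  have : L * (relu y - relu (y - K) - (relu x - relu (x - K))) +
    L * (relu (- x) - relu (- x - K) - (relu (- y) - relu (- y - K))) <= L * (y - x).
    rewrite -mulrDr; apply: ler_wpM2l => //; lra.
  lra.
  move=> x y; case: (lerP x y) => xy.
  - by apply: H.
  - by rewrite distrC; apply: H; apply: ltW.
Qed.

Definition nl (R : realType) (f : R -> R) (N : nat) : seq (R * R * R) :=
  [seq (1, - gridR N.+1%:R j, sl f (gridR N.+1%:R) j) | j <- iota 0 N] ++
  [seq (1, - gridR N.+1%:R j.+1, - sl f (gridR N.+1%:R) j) | j <- iota 0 N] ++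
  [seq (-1, - gridR N.+1%:R j, sl (negf f) (gridR N.+1%:R) j) | j <- iota 0 N] ++
  [seq (-1, - gridR N.+1%:R j.+1, - sl (negf f) (gridR N.+1%:R) j) | j <- iota 0 N].

Lemma nl_size (R : realType) (f : R -> R) N : size (nl f N) = (4 * N)%N.
Proof. rewrite /nl !size_cat !size_map size_iota; lia. Qed.

Lemma Pn_split (R : realType) (h : R -> R) (p : nat -> R) N (w s y : R) :
  (forall z, w * z = s * z) ->
  \sum_(j <- iota 0 N) nv (w, - p j, sl h p j) y +
  \sum_(j <- iota 0 N) nv (w, - p j.+1, - sl h p j) y = Pn h p N (s * y).
Proof.
move=> ws; rewrite /Pn /index_iota subn0 -big_split; apply: eq_bigr => j _.
rewrite /nv /Dj /= ws; ring.
Qed.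

Lemma nl_sum (R : realType) (f : R -> R) N x :
  f 0 + \sum_(e <- nl f N) nv e x = fe f N x.
Proof.
have A := @Pn_split R f (gridR N.+1%:R) N 1 1 x (fun z => erefl).
have B := @Pn_split R (negf f) (gridR N.+1%:R) N (-1) (-1) x (fun z => erefl).
rewrite mul1r in A; rewrite mulN1r in B.
rewrite /nl !big_cat /= !big_map /fe -A -B; ring.
Qed.

Lemma sqnorm_ge0 (R : realType) d (x : 'rV[R]_d) : 0 <= sqnorm x.
Proof. by rewrite /sqnorm; apply: sumr_ge0 => i _; apply: sqr_ge0. Qed.

Lemma sqfrob_ge0 (R : realType) m n (x : 'M[R]_(m, n)) : 0 <= sqfrob x.
Proof. by rewrite /sqfrob; apply: sumr_ge0 => i _; apply: sumr_ge0 => j _; apply: sqr_ge0. Qed.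

Lemma sq_le (R : realType) (u v : R) : 0 <= u -> 0 <= v -> u ^+ 2 <= v ^+ 2 -> u <= v.
Proof. move=> u0 v0 h; nra. Qed.

Unset Implicit Arguments. Set Strict Implicit.
Theorem lemma2p1 (R : realType) (T c : R) (f : R -> R)
  (beta : forall d : nat, 'rV[R]_d -> 'rV[R]_d)
  (sigma : forall d : nat, 'rV[R]_d -> 'M[R]_d)
  (gamma : forall d : nat, 'rV[R]_d -> 'rV[R]_d -> 'rV[R]_d)
  (g : forall d : nat, 'rV[R]_d -> R)
  (nu : forall d : nat, {measure set (RdB R d) -> \bar R}) :
  0 < T -> 2 <= c -> continuous f ->
  (forall d, (0 < d)%N -> continuous (beta d)) ->
  (forall d, (0 < d)%N -> continuous (sigma d)) ->
  (forall d, (0 < d)%N ->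
     continuous (fun p : 'rV[R]_d * 'rV[R]_d => gamma d p.1 p.2)) ->
  (forall d, (0 < d)%N -> continuous (g d)) ->
  (forall d, (0 < d)%N -> levy_measure (nu d)) ->
  (* (A1) *)
  (forall d, (0 < d)%N -> exists2 C : R, 0 < C &
     forall x y z : 'rV[R]_d,
       sqnorm (gamma d x z) <= C * Num.min 1 (sqnorm z) /\
       sqnorm (gamma d x z - gamma d y z)
         <= C * sqnorm (x - y) * Num.min 1 (sqnorm z)) ->
  (* (A2) *)
  (forall d, (0 < d)%N ->
     (forall x z : 'rV[R]_d, partials_exist (fun x' => gamma d x' z) x) /\
     exists2 lam : R, 0 < lam &
       forall (x z : 'rV[R]_d) (delta : R), 0 <= delta <= 1 ->
         lam <= `|\det (1%:M + delta *: jac (fun x' => gamma d x' z) x)|) ->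
  (* (A3) *)
  (forall d, (0 < d)%N -> forall x y : 'rV[R]_d,
     ((sqnorm (beta d x - beta d y) + sqfrob (sigma d x - sigma d y))%:E
      + \int[nu d]_(z in ~` [set (0%R : 'rV[R]_d)])
          (sqnorm (gamma d x z - gamma d y z))%:E
      <= (c * sqnorm (x - y))%:E)%E) ->
  (forall w1 w2 : R, `|f w1 - f w2| ^+ 2 <= c * `|w1 - w2| ^+ 2) ->
  (forall d, (0 < d)%N -> forall x y : 'rV[R]_d,
     `|g d x - g d y| ^+ 2 <= c * powR d%:R c * T^-1 * sqnorm (x - y)) ->
  (forall d, (0 < d)%N ->
     ((sqnorm (beta d 0) + sqfrob (sigma d 0))%:E
      + \int[nu d]_(z in ~` [set (0%R : 'rV[R]_d)]) (sqnorm (gamma d 0 z))%:E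
      + (T ^+ 3 * (`|f 0| + 1) ^+ 2 + T * `|g d 0| ^+ 2)%:E
      <= (c * powR d%:R c)%:E)%E) ->
  let b := 64 * (1 + Num.sqrt `|Num.sqrt c * (4 * Num.sqrt c
                     + 2 * Num.sqrt c * powR T (- (3 / 2)))|) in
  exists (fe : R -> R -> R) (Phi : R -> DNN R 1 1),
    forall d : nat, (0 < d)%N -> forall eps : R, 0 < eps < 1 ->
    forall w1 w2 : R,
      [/\ is_DNN (Phi eps) /\ continuous (fe eps) /\
          (forall x : R, realize (Phi eps) (const_mx x) = const_mx (fe eps x)),
          size (dims (Phi eps)) = 3%N /\
            3 <= b * powR d%:R c * powR eps (- c) / 4,
          (maxdim (Phi eps))%:R <= b * eps ^- 2 / 4 /\
            `|fe eps w1 - fe eps w2| ^+ 2 <= c * `|w1 - w2| ^+ 2,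
          `|f w1 - fe eps w1| ^+ 2 <= eps * (1 + `|w1| ^+ 4) &
          T ^+ 3 * `|fe eps 0| <= c * powR d%:R c].

Proof.
move=> T0 hc fc _ _ _ _ _ _ _ _ Hf _ H0 b.
set L := Num.sqrt c.
have c0 : 0 <= c by lra.
have Lsq : L ^+ 2 = c by rewrite /L sqr_sqrtr.
have L0 : 0 <= L by apply: sqrtr_ge0.
have L1 : 1 <= L by nra.
have hL : forall a b, `|f a - f b| <= L * `|a - b|.
  move=> a b'; apply: sq_le; [exact: normr_ge0 | by rewrite mulr_ge0 |].
  by rewrite exprMn Lsq.
pose Nof (eps : R) := Num.truncn (6 * L / eps).
exists (fun eps => fe f (Nof eps)), (fun eps => net (f 0) (nl f (Nof eps))).
move=> d hd eps /andP[he0 he1] w1 w2.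
set N := Nof eps.
have ie1 : 1 <= eps^-1 by rewrite invf_ge1 // ltW.
have xge : 6 * L <= 6 * L / eps.
  by rewrite -[X in X <= _]mulr1 ler_wpM2l // ?invf_ge1 ?ltW //; lra.
have hN : (0 < N)%N by rewrite /N /Nof truncn_gt0; lra.
have [Nle Ngt] : N%:R <= 6 * L / eps /\ 6 * L / eps < N.+1%:R.
  by apply/andP; apply: truncn_itv; lra.
have hm : 36 * c <= eps * (N.+1%:R) ^+ 2.
  have a : 6 * L < N.+1%:R * eps by rewrite -ltr_pdivrMr.
  have b1 : 36 * c <= (N.+1%:R * eps) ^+ 2 by rewrite -Lsq; nra.
  have : (N.+1%:R * eps) ^+ 2 <= eps * N.+1%:R ^+ 2.
    rewrite exprMn [eps * _]mulrC; apply: ler_wpM2l; [exact: sqr_ge0 | nra].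
  lra.
have sz : size (nl f N) = (4 * N)%N by apply: nl_size.
have szp : (0 < size (nl f N))%N by rewrite sz muln_gt0.
split.
- split; first exact: net_is.
  split; first exact: (lip_cont L0 (fe_lip N hL)).
  by move=> x; rewrite net_real nl_sum.
- split; first by rewrite net_dims.
  have P1 : 1 <= powR d%:R c.
    have d1 : 1 <= d%:R :> R by rewrite ler1n.
    by have := ler_powR d1 c0; rewrite powRr0.
  have P2 : 1 <= powR eps (- c).
    have e01 : 0 < eps <= 1 by rewrite he0 ltW.
    have nc : - c <= 0 by lra.
    by have := ger_powR e01 nc; rewrite powRr0.
  have b64 : 64 <= b by rewrite /b; have := sqrtr_ge0 (`|L * (4 * L + 2 * L * powR T (- (3 / 2)))|); nra.
  have : 64 <= b * powR d%:R c by nra.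
  move=> h1; have : 64 <= b * powR d%:R c * powR eps (- c) by nra.
  lra.
- split.
  + rewrite net_maxdim // sz natrM.
    set Pw := powR T (- (3 / 2)).
    have Pw0 : 0 <= Pw by apply: powR_ge0.
    have bdef : b = 64 * (1 + Num.sqrt `|L * (4 * L + 2 * L * Pw)|) by [].
    set s := Num.sqrt `|L * (4 * L + 2 * L * Pw)| in bdef.
    have s0 : 0 <= s by apply: sqrtr_ge0.
    have s2 : s ^+ 2 = L * (4 * L + 2 * L * Pw).
      rewrite /s sqr_sqrtr ?normr_ge0 // ger0_norm //.
      apply: mulr_ge0 => //; nra.
    have sL : 2 * L <= s by apply: sq_le; nra.
    have bL : 64 + 128 * L <= b by rewrite bdef; lra.
    rewrite -exprVn.
    set ie := eps^-1 in ie1 Nle *.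
    have : L * ie <= L * ie ^+ 2 by rewrite ler_wpM2l //; nra.
    have : b * ie ^+ 2 >= (64 + 128 * L) * ie ^+ 2 by rewrite ler_wpM2r //; nra.
    nra.
  + have := fe_lip N hL w1 w2 => h.
    have : 0 <= `|fe f N w1 - fe f N w2| by apply: normr_ge0.
    rewrite -Lsq -exprMn; nra.
- exact: (fe_err hc he0 he1 hN hm hL).
- rewrite fe0.
  have H := H0 d hd.
  have Hx : ((T ^+ 3 * (`|f 0| + 1) ^+ 2 + T * `|g d 0| ^+ 2)%:E <= (c * powR d%:R c)%:E)%E.
    apply: le_trans H; apply: lee_paddl => //.
    apply: adde_ge0; first by rewrite lee_fin; apply: addr_ge0; [apply: sqnorm_ge0 | apply: sqfrob_ge0].
    by apply: integral_ge0 => z _; rewrite lee_fin; apply: sqnorm_ge0.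
  rewrite lee_fin in Hx.
  have T3 : 0 <= T ^+ 3 by apply: exprn_ge0; apply: ltW.
  have g0 : 0 <= T * `|g d 0| ^+ 2 by apply: mulr_ge0; [apply: ltW | apply: sqr_ge0].
  have f1 : `|f 0| <= (`|f 0| + 1) ^+ 2 by have := normr_ge0 (f 0); nra.
  have : T ^+ 3 * `|f 0| <= T ^+ 3 * (`|f 0| + 1) ^+ 2 by apply: ler_wpM2l.
  lra.
Qed.
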